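(* Let $U\subset\mathbb{C}\setminus\{0\}$ be a connected domain on which an analytic branch of $\ln x$ is fixed, and write $x^{c}=e^{c\ln x}$ for $c\in\mathbb{C}$. Let $f_1,f_2$ be holomorphic and nowhere vanishing on $U$. Then $(f_1,f_2)$ is a nondegenerate period-$2$ orbit of $\mathcal{A}$ (i.e. $\mathcal{A}[f_1]=f_2$, $\mathcal{A}[f_2]=f_1$ and $f_1\not\equiv f_2$) if and only if there exist constants $a,c\in\mathbb{C}\setminus\{0\}$ with $1-ax^{c}\neq 0$ on $U$ such that \[ f_1(x)=\frac{c\,a\,x^{c}}{1-ax^{c}},\qquad f_2(x)=\frac{c}{1-ax^{c}}\qquad (x\in U). \] Moreover, the ordering of the pair is irrelevant: the unordered set $\{f_1,f_2\}$ represents a single $2$-cycle of $\mathcal{A}$.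
   Context: For a complex-differentiable, nowhere-vanishing function $f$ on a domain $U\subset\mathbb{C}\setminus\{0\}$, the dual logarithmic derivative operator is $\mathcal{A}[f](x)=\dfrac{\mathrm{d}\ln f(x)}{\mathrm{d}\ln x}=\dfrac{x f'(x)}{f(x)}$ (for fixed analytic branches of the logarithms). A pair $(f_1,f_2)$ of holomorphic nowhere-vanishing functions on $U$ is a period-$2$ orbit of $\mathcal{A}$ if $\mathcal{A}[f_1]=f_2$ and $\mathcal{A}[f_2]=f_1$; it is nondegenerate if $f_1\not\equiv f_2$. *)

(* Defs.v *)
(* MathComp-Analysis over an abstract R : realType;
   the complex plane is R[i] (mathcomp-real-closed), with its modulus
   topology; complex derivatives are MathComp-Analysis derivatives of maps
   CC R -> CC R viewed as a normed module over the field CC R itself. *)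
From mathcomp Require Import all_boot all_algebra complex.
From mathcomp Require Import all_classical all_reals all_analysis.
Import GRing.Theory Num.Theory numFieldNormedType.Exports.
Export numFieldNormedType.Exports.

Set Implicit Arguments.
Unset Strict Implicit.
Unset Printing Implicit Defensive.

Local Open Scope ring_scope.
Local Open Scope classical_set_scope.

Definition CC (R : realType) : numClosedFieldType := R[i].

Definition cexp (R : realType) (z : CC R) : CC R :=
  let: Complex u v := (z : R[i]) in Complex (expR u * cos v) (expR u * sin v).

Definition holomorphic_on (R : realType) (U : set (CC R)) (f : CC R -> CC R) :=
  forall x, U x -> derivable f x 1.

Definition is_domain (R : realType) (U : set (CC R)) :=
  [/\ U !=set0, open U & connected U].

Definition log_branch (R : realType) (U : set (CC R)) (L : CC R -> CC R) :=
  holomorphic_on U L /\ (forall x, U x -> cexp (L x) = x).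

Definition cpow (R : realType) (L : CC R -> CC R) (c x : CC R) : CC R :=
  cexp (c * L x).

Definition dual_logder (R : realType) (f : CC R -> CC R) (x : CC R) : CC R :=
  x * derive1 f x / f x.

Definition period2_orbit (R : realType) (U : set (CC R)) (f1 f2 : CC R -> CC R) :=
  (forall x, U x -> dual_logder f1 x = f2 x) /\
  (forall x, U x -> dual_logder f2 x = f1 x).

Definition nondeg_pair (R : realType) (U : set (CC R)) (f1 f2 : CC R -> CC R) :=
  exists2 x, U x & f1 x != f2 x.

(* Main.v *)
Require Import Defs.
From mathcomp Require Import all_boot all_algebra complex.
From mathcomp Require Import all_classical all_reals all_analysis.
From mathcomp Require Import ring lra.
Import GRing.Theory Num.Theory numFieldNormedType.Exports.
Import order.Order.TTheory.
Local Open Scope ring_scope.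
Local Open Scope classical_set_scope.
Set Implicit Arguments.
Unset Strict Implicit.

Module Helpers.
Local Open Scope complex_scope.


Lemma normC_ub (R : realType) (a b : R) : `|(a +i* b : CC R)| <= (`|a| + `|b|)%:C.
Proof.
rewrite normc_def /= lecR -[X in _ <= X]ger0_norm ?addr_ge0 // -sqrtr_sqr.
rewrite ler_sqrt ?sqr_ge0 //.
rewrite -[a^+2]real_normK ?num_real // -[b^+2]real_normK ?num_real //.
have := normr_ge0 a; have := normr_ge0 b; nra.
Qed.

Lemma normC_Re (R : realType) (z : CC R) : (`|@complex.Re R z|)%:C <= `|z|.
Proof.
rewrite normc_def lecR -sqrtr_sqr ler_sqrt; last by rewrite addr_ge0 ?sqr_ge0.
by rewrite lerDl sqr_ge0.
Qed.

Lemma normC_Im (R : realType) (z : CC R) : (`|@complex.Im R z|)%:C <= `|z|.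
Proof.
rewrite normc_def lecR -sqrtr_sqr ler_sqrt; last by rewrite addr_ge0 ?sqr_ge0.
by rewrite lerDr sqr_ge0.
Qed.

Lemma normC_real (R : realType) (k : R) : `|(k%:C : CC R)| = (`|k|)%:C.
Proof. by rewrite normc_def /= (_ : (0:R) ^+ 2 = 0) ?addr0 ?sqrtr_sqr // expr0n. Qed.

Lemma posC (R : realType) (e : CC R) : 0 < e -> exists2 r : R, 0 < r & e = r%:C.
Proof.
case: e => a b; rewrite ltcE /= => /andP[/eqP -> a0]; by exists a.
Qed.
Lemma deriv_eps (K : numFieldType) (f : K -> K) (z d : K) : is_derive z 1 f d ->
  forall e : K, 0 < e -> \forall h \near (0:K), `|f (z + h) - f z - h * d| <= e * `|h|.
Proof.
move=> [df dv] e e0.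
have C : (fun h : K => h^-1 *: ((f \o shift z) (h *: 1) - f z)) @ 0^' --> d.
  by rewrite -dv; exact: df.
move/cvgrPdist_le: C => /(_ e e0); rewrite near_withinE => N.
move: N; apply: filter_app; near=> h => /= Nh.
have [->|h0] := eqVneq h 0.
  by rewrite addr0 subrr mul0r subr0 normr0 mulr0.
have := Nh h0.
rewrite -normrN opprB. 
have -> : h^-1 *: (f (h *: 1 + z) - f z) - d = h^-1 * (f (z + h) - f z - h * d).
  rewrite [h%:A]mulr1 (addrC h z).
  change (h^-1 * (f (z+h) - f z) - d = h^-1 * (f (z + h) - f z - h * d)).
  by rewrite !mulrBr mulKf.
rewrite normrM normfV mulrC => H.
by rewrite -ler_pdivrMr ?normr_gt0.
Unshelve. all: by end_near. Qed.

Lemma eps_deriv (K : numFieldType) (f : K -> K) (z d : K) :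
  (forall e : K, 0 < e -> \forall h \near (0:K), `|f (z + h) - f z - h * d| <= e * `|h|) ->
  is_derive z 1 f d.
Proof.
move=> H.
have C : (fun h : K => h^-1 *: ((f \o shift z) (h *: 1) - f z)) @ 0^' --> d.
  apply/cvgrPdist_le => e e0; rewrite near_withinE.
  apply: filter_app (H e e0); near=> h => Hh h0 /=.
  rewrite -normrN opprB.
  have -> : h^-1 *: (f (h *: 1 + z) - f z) - d = h^-1 * (f (z + h) - f z - h * d).
    rewrite [h *: 1]mulr1 (addrC h z).
    change (h^-1 * (f (z+h) - f z) - d = h^-1 * (f (z + h) - f z - h * d)).
    by rewrite !mulrBr mulKf.
  by rewrite normrM normfV mulrC ler_pdivrMr ?normr_gt0.
apply: DeriveDef; first by apply/cvg_ex; exists d.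
exact: cvg_lim C.
Unshelve. all: by end_near. Qed.

Lemma is_derive_compK (K : numFieldType) (f g : K -> K) (x df dg : K) :
  is_derive x 1 f df -> is_derive (f x) 1 g dg -> is_derive x 1 (g \o f) (dg * df).
Proof.
move=> [/derivable1_diffP dfx dfv] [/derivable1_diffP dgx dgv].
have dc : differentiable (g \o f) x by exact/differentiable_comp.
apply: DeriveDef; first exact/derivable1_diffP.
rewrite -derive1E derive1E'// diff_comp // -[X in 'd  _ _ X = _]mulr1 /=.
rewrite -derive1E' // derive1E dfv mulr1 -[df in 'd _ _ df]mulr1.
change ('d g (f x) (df *: 1) = dg * df).
by rewrite linearZ /= -derive1E' // derive1E dgv mulrC.
Qed.
Lemma cexpD (R : realType) (a b : CC R) : cexp (a + b) = cexp a * cexp b.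
Proof.
case: a => x y; case: b => u v.
rewrite /cexp /= expRD cosD sinD.
apply/eqP; rewrite eq_complex /=; apply/andP; split; apply/eqP; ring.
Qed.

Lemma cexp0 (R : realType) : cexp (0 : CC R) = 1.
Proof.
by rewrite /cexp /= expR0 cos0 sin0 mul1r mulr0.
Qed.

Lemma cexp_neq0 (R : realType) (a : CC R) : cexp a != 0.
Proof.
apply/eqP => H; have := @cexpD R a (-a); rewrite subrr cexp0 H mul0r.
by apply/eqP; rewrite oner_eq0.
Qed.
Lemma real_est (R : realFieldType) (eps N u v eu cv sv : R) : 0 < eps -> eps <= 1 -> 0 < eu ->
  `|eu - 1 - u| <= eps * `|u| -> `|cv - 1| <= eps * `|v| -> `|sv - v| <= eps * `|v| ->
  `|u| <= eps -> `|u| <= N -> `|v| <= N ->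
  `|eu * cv - 1 - u| + `|eu * sv - v| <= 9 * eps * N.
Proof.
move=> e0 e1 eu0 HA HC HS ue uN vN.
have -> : eu * cv - 1 - u = (eu - 1 - u) + eu * (cv - 1) by ring.
have -> : eu * sv - v = (eu - 1) * sv + (sv - v) by ring.
have F1 := ler_normD (eu - 1 - u) (eu * (cv - 1)).
have F2 := ler_normD ((eu - 1) * sv) (sv - v).
rewrite !normrM (gtr0_norm eu0) in F1 F2 *.
have G1 : `|eu - 1| <= `|eu - 1 - u| + `|u|.
  by have := ler_normD (eu - 1 - u) u; rewrite subrK.
have G2 : `|sv| <= `|sv - v| + `|v|.
  by have := ler_normD (sv - v) v; rewrite subrK.
have G3 : eu <= 3.
  have := ler_norm (eu - 1 - u); have := ler_norm u.
  have : eps * `|u| <= 1 * 1 by apply: ler_pM => //; [exact: ltW | exact: le_trans ue e1].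
  lra.
have P1 : eu * `|cv - 1| <= 3 * (eps * N).
  apply: ler_pM => //; first exact: ltW.
  apply: (le_trans HC); apply: ler_pM => //; exact: ltW.
have P2 : `|eu - 1| * `|sv| <= (2 * eps) * (2 * N).
  apply: ler_pM => //.
  - apply: (le_trans G1); have : eps * `|u| <= eps * eps by apply: ler_pM => //; exact: ltW.
    have : eps * eps <= eps * 1 by apply: ler_pM => //; exact: ltW.
    lra.
  - apply: (le_trans G2); have : eps * `|v| <= 1 * N by apply: ler_pM => //; exact: ltW.
    lra.
have P3 : eps * `|u| <= eps * N by apply: ler_pM => //; exact: ltW.
have P4 : eps * `|v| <= eps * N by apply: ler_pM => //; exact: ltW.
lra.
Qed.
Lemma cexp_small (R : realType) (e : R) : 0 < e ->
  \forall h \near (0 : CC R), `|cexp h - 1 - h| <= e%:C * `|h|.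
Proof.
move=> e0.
pose eps := Num.min 1 (e / 9).
have eps0 : 0 < eps by rewrite lt_min ltr01 divr_gt0.
have H1 := @deriv_eps R _ _ _ (is_derive_expR 0) _ eps0.
have H2 := @deriv_eps R _ _ _ (is_derive_cos 0) _ eps0.
have H3 := @deriv_eps R _ _ _ (is_derive_sin 0) _ eps0.
have H4 : \forall x \near (0:R), `|x| <= eps := nbhs0_le eps0.
have N : \forall u \near (0:R), [/\ `|expR u - 1 - u| <= eps * `|u|,
   `|cos u - 1| <= eps * `|u|, `|sin u - u| <= eps * `|u| & `|u| <= eps].
  near=> u; split.
  - by near: u; move: H1; apply: filter_app; near=> u; rewrite add0r expR0 mulr1.
  - by near: u; move: H2; apply: filter_app; near=> u; rewrite add0r cos0 sin0 oppr0 mulr0 subr0.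
  - by near: u; move: H3; apply: filter_app; near=> u; rewrite add0r cos0 sin0 subr0 mulr1.
  - by near: u.
move/nbhs_norm0P: N => [d d0 Hd].
apply/nbhs_norm0P; exists d%:C; first by rewrite /= ltcR.
move=> [u v] /= hlt.
have uN : `|u| <= Num.sqrt (u^+2 + v^+2) by have := @normC_Re R (u +i* v); rewrite normc_def lecR.
have vN : `|v| <= Num.sqrt (u^+2 + v^+2) by have := @normC_Im R (u +i* v); rewrite normc_def lecR.
have Nd : Num.sqrt (u^+2 + v^+2) < d by move: hlt; rewrite normc_def ltcR.
case: (Hd u) => [/=|Eu _ _ Ue]; first exact: le_lt_trans uN Nd.
case: (Hd v) => [/=|_ Cv Sv _]; first exact: le_lt_trans vN Nd.
have -> : expR u * cos v +i* (expR u * sin v) - 1 - u +i* v =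
   (expR u * cos v - 1 - u) +i* (expR u * sin v - v).
  by apply/eqP; rewrite eq_complex /= subr0 !eqxx.
apply: le_trans (@normC_ub R _ _) _.
rewrite normc_def /= -rmorphM lecR.
have e1 : eps <= 1 by rewrite ge_min lexx.
have e9 : eps <= e / 9 by rewrite ge_min lexx orbT.
apply: le_trans (@real_est _ eps _ u v _ _ _ eps0 e1 (expR_gt0 u) Eu Cv Sv Ue uN vN) _.
have N0 := sqrtr_ge0 (u ^+ 2 + v ^+ 2).
rewrite ler_wpM2r //. lra.
Unshelve. all: by end_near. Qed.


Lemma is_derive_cexp (R : realType) (z : CC R) : is_derive z 1 (@cexp R) (cexp z).
Proof.
apply: eps_deriv => e e0.
have [r r0 ->] := @posC R e e0.
set mr := Num.sqrt (complex.Re (cexp z) ^+ 2 + complex.Im (cexp z) ^+ 2).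
have mr0 : 0 <= mr by exact: sqrtr_ge0.
have r'0 : 0 < r / (mr + 1) by rewrite divr_gt0 // ltr_wpDl.
move: (@cexp_small R _ r'0); apply: filter_app; near=> h => H.
rewrite cexpD (_ : cexp z * cexp h - cexp z - h * cexp z = cexp z * (cexp h - 1 - h)); last by ring.
rewrite normrM; apply: le_trans (ler_wpM2l (normr_ge0 _) H) _.
rewrite mulrA ler_wpM2r // normc_def -/mr -rmorphM lecR.
have q : mr / (mr + 1) <= 1 by rewrite ler_pdivrMr ?mul1r ?lerDl // ltr_wpDl.
rewrite mulrCA -[X in _ <= X]mulr1 ler_wpM2l //; first exact: ltW.
Unshelve. all: by end_near. Qed.
Section D.
Context {K : numFieldType}.
Implicit Types (f g : K -> K) (x df dg k : K).

Lemma dM f g x df dg : is_derive x 1 f df -> is_derive x 1 g dg ->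
  is_derive x 1 (fun y => f y * g y) (f x * dg + g x * df).
Proof. move=> Hf Hg; exact: (is_deriveM Hf Hg). Qed.

Lemma dV f x df : f x != 0 -> is_derive x 1 f df ->
  is_derive x 1 (fun y => (f y)^-1) (- (f x)^-2 * df).
Proof.
move=> f0 [Hd Hv]; apply: DeriveDef; first exact: derivableV.
by rewrite deriveV // Hv.
Qed.

Lemma dC x k : is_derive x 1 (fun _ : K => k) 0.
Proof. exact: is_derive_cst. Qed.

Lemma dD f g x df dg : is_derive x 1 f df -> is_derive x 1 g dg ->
  is_derive x 1 (fun y => f y + g y) (df + dg).
Proof. move=> Hf Hg; exact: (is_deriveD Hf Hg). Qed.

Lemma dB f g x df dg : is_derive x 1 f df -> is_derive x 1 g dg ->
  is_derive x 1 (fun y => f y - g y) (df - dg).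
Proof. move=> Hf Hg; exact: (is_deriveB Hf Hg). Qed.

Lemma dI x : is_derive x 1 (fun y : K => y) 1.
Proof. exact: is_derive_id. Qed.

Lemma dUniq f x d1 d2 : is_derive x 1 f d1 -> is_derive x 1 f d2 -> d1 = d2.
Proof. by move=> [_ <-] [_ <-]. Qed.

Lemma dNear (U : set K) f g x d : open U -> U x -> (forall y, U y -> f y = g y) ->
  is_derive x 1 g d -> is_derive x 1 f d.
Proof.
move=> oU Ux fg Hg; apply: near_eq_is_derive Hg.
have : nbhs x U by rewrite openE in oU; exact: oU.
by apply: filter_app; near=> y => /fg ->.
Unshelve. all: by end_near. Qed.

Lemma derive1_is f x d : is_derive x 1 f d -> derive1 f x = d.
Proof. by move=> [_ <-]; rewrite derive1E. Qed.

Lemma holo_is (U : set K) f x : (forall y, U y -> derivable f y 1) -> U x -> is_derive x 1 f (derive1 f x).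
Proof. by move=> H Ux; rewrite derive1E; apply: derivableP; exact: H. Qed.

End D.
Lemma L_deriv (R : realType) (U : set (CC R)) (L : CC R -> CC R) (x : CC R) :
  open U -> log_branch U L -> U x -> is_derive x 1 L x^-1.
Proof.
move=> oU [HL HE] Ux.
have H1 := holo_is HL Ux.
have H2 := is_derive_compK H1 (is_derive_cexp (L x)).
have H3 : is_derive x 1 (@cexp R \o L) 1 := dNear oU Ux (fun y Uy => HE y Uy) (dI x).
have := dUniq H2 H3; rewrite HE // => E.
have x0 : x != 0 by apply/eqP => x0; move: E; rewrite x0 mul0r => /eqP; rewrite eq_sym oner_eq0.
suff -> : x^-1 = derive1 L x by [].
by rewrite -(mulKf x0 (derive1 L x)) E mulr1.
Qed.

Lemma cpow_deriv (R : realType) (U : set (CC R)) (L : CC R -> CC R) (c x : CC R) :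
  open U -> log_branch U L -> U x -> is_derive x 1 (cpow L c) (c * x^-1 * cpow L c x).
Proof.
move=> oU HL Ux.
have Hc := dM (dC x c) (L_deriv oU HL Ux).
have := is_derive_compK Hc (is_derive_cexp (c * L x)).
move=> H; change (is_derive x 1 (@cexp R \o (fun y => c * L y)) (c * x^-1 * cpow L c x)).
apply: is_derive_eq H _; rewrite /cpow; ring.
Qed.
Lemma open_loc (T : topologicalType) (U : set T) (P : T -> Prop) :
  open U -> (forall x, U x -> P x -> \forall y \near x, P y) ->
  open [set z | U z /\ P z].
Proof.
move=> oU H; rewrite openE => z [Uz Pz].
have N1 : nbhs z U by rewrite openE in oU; exact: oU.
have N2 := H z Uz Pz.
rewrite /interior; near=> q; split; [exact: (near N1 q) | exact: (near N2 q)].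
Unshelve. all: by end_near. Qed.

Lemma locconst (T : topologicalType) (Y : Type) (U : set T) (w : T -> Y) :
  open U -> connected U -> (forall x, U x -> \forall y \near x, w y = w x) ->
  forall x y, U x -> U y -> w y = w x.
Proof.
move=> oU cU Hl x y Ux Uy.
pose B := [set z | U z /\ w z = w x].
have BU : B = U.
  apply: cU.
  - by exists x.
  - exists B.
      apply: open_loc => // z Uz e; move: (Hl z Uz); apply: filter_app.
      by near=> q => ->.
    by apply/seteqP; split => z; [move=> [Uz e]; split | move=> [Uz [_ e]]].
  - exists (~` [set z | U z /\ w z <> w x]).
      apply: open_closedC; apply: open_loc => // z Uz e; move: (Hl z Uz); apply: filter_app.
      by near=> q => ->.
    apply/seteqP; split => z.
      by move=> [Uz e]; split => // -[_ ].
    move=> [Uz H]; split => //; apply: contrapT => ne; exact: H.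
have : B y by rewrite BU.
by case.
Unshelve. all: by end_near. Qed.

Lemma seg_real (R : realType) (w : CC R -> CC R) (phi : CC R -> R) (x d : CC R) (t : R) :
  (forall a b, phi (a - b) = phi a - phi b) -> (forall c, (`|phi c|)%:C <= `|c|) ->
  is_derive (x + t%:C * d) 1 w 0 -> is_derive t 1 (fun s => phi (w (x + s%:C * d))) 0.
Proof.
move=> phiB phiN Hw.
apply: eps_deriv => e e0.
set nd := Num.sqrt (complex.Re d ^+2 + complex.Im d ^+2).
have nd0 : 0 <= nd by exact: sqrtr_ge0.
have nd1 : 0 < nd + 1 by rewrite ltr_wpDl.
have e'0 : 0 < (e / (nd + 1))%:C by rewrite ltcR divr_gt0.
move: (deriv_eps Hw e'0) => /nbhs_norm0P [δ δ0 Hδ].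
have [δr δr0 Eδ] := posC δ0.
apply/nbhs_norm0P; exists (δr / (nd + 1)); first by rewrite /= divr_gt0.
move=> s /= hs.
have nsd : `|s%:C * d| = (`|s| * nd)%:C by rewrite normrM normC_real normc_def -rmorphM.
have Hk : `|s%:C * d| < δ.
  rewrite nsd Eδ ltcR.
  apply: le_lt_trans (_ : `|s| * (nd + 1) < δr).
    by rewrite ler_wpM2l // lerDl.
  by rewrite -ltr_pdivlMr.
have := Hδ _ Hk; rewrite /= mulr0 subr0 nsd -rmorphM => H.
rewrite mulr0 subr0 -phiB rmorphD mulrDl addrA.
have := le_trans (phiN _) H; rewrite lecR => H2.
apply: le_trans H2 _.
have q : nd / (nd + 1) <= 1 by rewrite ler_pdivrMr // mul1r lerDl.
rewrite (_ : e / (nd+1) * (`|s| * nd) = e * `|s| * (nd / (nd+1))); last by ring.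
by rewrite -[X in _ <= X]mulr1 ler_wpM2l // mulr_ge0 // ltW.
Qed.

Lemma seg_const (R : realType) (w : CC R -> CC R) (phi : CC R -> R) (x d : CC R) :
  (forall a b, phi (a - b) = phi a - phi b) -> (forall c, (`|phi c|)%:C <= `|c|) ->
  (forall t : R, 0 <= t <= 1 -> is_derive (x + t%:C * d) 1 w 0) ->
  phi (w (x + d)) = phi (w x).
Proof.
move=> phiB phiN Hw.
pose f := fun s : R => phi (w (x + s%:C * d)).
have D : forall t : R, 0 <= t <= 1 -> is_derive t 1 f 0.
  by move=> t ht; exact: (seg_real phiB phiN (Hw t ht)).
have cont : {within `[0, 1], continuous f}.
  apply: (@derivable_within_continuous R R f `[0, 1]%R) => t; rewrite in_itv /= => ht.
  by case: (D t ht).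
have D' : forall t : R, t \in `]0, 1[%R -> is_derive t 1 f ((fun _ => 0) t).
  by move=> t; rewrite in_itv /= => /andP[t0 t1]; apply: D; rewrite !ltW.
have [c hc E] := @MVT R f (fun _ => 0) 0 1 ltr01 D' cont.
move/eqP: E; rewrite mul0r subr_eq0 /f rmorph0 rmorph1 mul0r mul1r addr0.
by move/eqP.
Qed.

Lemma ReB (R : realType) (a b : CC R) : complex.Re (a - b) = complex.Re a - complex.Re b.
Proof. by case: a => ? ?; case: b => ? ?. Qed.
Lemma ImB (R : realType) (a b : CC R) : complex.Im (a - b) = complex.Im a - complex.Im b.
Proof. by case: a => ? ?; case: b => ? ?. Qed.

Lemma deriv0_loc (R : realType) (U : set (CC R)) (w : CC R -> CC R) (x : CC R) :
  open U -> U x -> (forall y, U y -> is_derive y 1 w 0) -> \forall y \near x, w y = w x.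
Proof.
move=> oU Ux Hw.
have : nbhs x U by rewrite openE in oU; exact: oU.
move/nbhs_normP => [r r0 Hr].
apply/nbhs_normP; exists r => // y /= hy.
have seg : forall t : R, 0 <= t <= 1 -> is_derive (x + t%:C * (y - x)) 1 w 0.
  move=> t /andP[t0 t1]; apply: Hw; apply: Hr => /=.
  rewrite opprD addrA subrr sub0r normrN normrM normC_real.
  apply: le_lt_trans hy; rewrite distrC ler_piMl //.
  by rewrite lecR ger0_norm.
have E1 := seg_const (@ReB R) (@normC_Re R) seg.
have E2 := seg_const (@ImB R) (@normC_Im R) seg.
move: E1 E2; rewrite addrC subrK.
by case: (w y) => a b; case: (w x) => c d /= -> ->.
Qed.

Lemma deriv0_const (R : realType) (U : set (CC R)) (w : CC R -> CC R) :
  open U -> connected U -> (forall y, U y -> is_derive y 1 w 0) ->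
  forall x y, U x -> U y -> w y = w x.
Proof.
move=> oU cU Hw; apply: locconst => // x Ux; exact: deriv0_loc.
Qed.

Lemma holo_isC (R : realType) (U : set (CC R)) (f : CC R -> CC R) (x : CC R) :
  holomorphic_on U f -> U x -> is_derive x 1 f (derive1 f x).
Proof. move=> H Ux. have K := holo_is H Ux. exact K. Qed.
Lemma fwd_generic (K : numFieldType) (U : set K) (P : K -> K -> K) (f1 f2 : K -> K) :
  open U ->
  (forall w : K -> K, (forall y, U y -> is_derive y 1 w 0) -> forall x y, U x -> U y -> w y = w x) ->
  (forall x, U x -> x != 0) ->
  (forall c x, U x -> is_derive x 1 (P c) (c * x^-1 * P c x)) ->
  (forall c x, P c x != 0) ->
  (forall x, U x -> derivable f1 x 1) -> (forall x, U x -> derivable f2 x 1) ->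
  (forall x, U x -> f1 x != 0) -> (forall x, U x -> f2 x != 0) ->
  (forall x, U x -> x * derive1 f1 x / f1 x = f2 x) -> (forall x, U x -> x * derive1 f2 x / f2 x = f1 x) ->
  (exists2 x, U x & f1 x != f2 x) ->
  exists a c : K, [/\ a != 0, c != 0, (forall x, U x -> 1 - a * P c x != 0) &
     (forall x, U x -> f1 x = c * a * P c x / (1 - a * P c x) /\ f2 x = c / (1 - a * P c x))].
Proof.
move=> oU Hc Unz HP Pnz h1 h2 n1 n2 A B [x0 Ux0 ne].
have E1 : forall x, U x -> x * derive1 f1 x = f2 x * f1 x.
  by move=> x Ux; rewrite -(A x Ux) divfK // n1.
have E2 : forall x, U x -> x * derive1 f2 x = f1 x * f2 x.
  by move=> x Ux; rewrite -(B x Ux) divfK // n2.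
have Hg : forall y, U y -> is_derive y 1 (fun y => f1 y - f2 y) 0.
  move=> y Uy; apply: is_derive_eq (dB (holo_is h1 Uy) (holo_is h2 Uy)) _.
  apply/eqP; rewrite subr_eq0; apply/eqP; apply: (mulfI (Unz y Uy)).
  by rewrite (E1 y Uy) (E2 y Uy) mulrC.
have G := Hc _ Hg.
set c := f2 x0 - f1 x0.
have c0 : c != 0 by rewrite subr_eq0 eq_sym.
have F2 : forall x, U x -> f2 x = f1 x + c.
  move=> x Ux; have := G x0 x Ux0 Ux; rewrite /c => H.
  have -> : f2 x = f1 x - (f1 x - f2 x) by ring.
  rewrite H; ring.
pose w := fun y => ((f1 y)^-1 + c^-1) * P c y.
have Hw : forall y, U y -> is_derive y 1 w 0.
  move=> y Uy.
  apply: is_derive_eq (dM (dD (dV (n1 y Uy) (holo_is h1 Uy)) (dC y c^-1)) (HP c y Uy)) _.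
  have D1 : derive1 f1 y = (f1 y + c) * f1 y / y.
    by rewrite -F2 // -(E1 y Uy) mulrC mulKf // Unz.
  rewrite D1.
  have := Unz y Uy; have := n1 y Uy; move: c0.
  by move=> H1 H2 H3; field; rewrite H1 H2 H3.
have Gw := Hc _ Hw.
have f2c : forall x, U x -> f1 x + c != 0 by move=> x Ux; rewrite -F2 // n2.
have W0 : w x0 != 0.
  rewrite /w mulf_neq0 //.
  have -> : (f1 x0)^-1 + c^-1 = (f1 x0 + c) / (f1 x0 * c).
    by field; rewrite c0 n1.
  by rewrite mulf_neq0 // ?invr_neq0 // ?f2c // mulf_neq0 // n1.
have K1 : forall x, U x -> (c * w x0)^-1 * P c x = f1 x / (f1 x + c).
  move=> x Ux; rewrite -(Gw x0 x Ux0 Ux) /w.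
  have := Pnz c x; have := n1 x Ux; have := f2c x Ux; move: c0 => H1 H2 H3 H4.
  by field; rewrite H1 H2 H3 H4.
exists (c * w x0)^-1, c; split => //.
- by rewrite invr_neq0 // mulf_neq0.
- move=> x Ux; rewrite K1 //.
  have -> : 1 - f1 x / (f1 x + c) = c / (f1 x + c).
    by field; rewrite f2c.
  by rewrite mulf_neq0 // invr_neq0 // f2c.
- move=> x Ux; rewrite -[c * _ * P c x]mulrA K1 // F2 //.
  have := n1 x Ux; have := f2c x Ux; move: c0 => H1 H2 H3.
  by split; field; rewrite H2 addrC addKr H1.
Qed.
Lemma bwd_generic (K : numFieldType) (U : set K) (P : K -> K -> K) (f1 f2 : K -> K) :
  open U -> U !=set0 -> (forall x, U x -> x != 0) ->
  (forall c x, U x -> is_derive x 1 (P c) (c * x^-1 * P c x)) ->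
  (forall c x, P c x != 0) ->
  (exists a c : K, [/\ a != 0, c != 0, (forall x, U x -> 1 - a * P c x != 0) &
     (forall x, U x -> f1 x = c * a * P c x / (1 - a * P c x) /\ f2 x = c / (1 - a * P c x))]) ->
  [/\ (forall x, U x -> x * derive1 f1 x / f1 x = f2 x), (forall x, U x -> x * derive1 f2 x / f2 x = f1 x) &
    (exists2 x, U x & f1 x != f2 x)].
Proof.
move=> oU [x0 Ux0] Unz HP Pnz [a [c [a0 c0 nz F]]].
have HQ : forall y, U y -> is_derive y 1 (fun z => (1 - a * P c z)^-1)
    (- (1 - a * P c y) ^- 2 * (0 - (a * (c * y^-1 * P c y) + P c y * 0))).
  move=> y Uy; exact: (dV (f:=fun z => 1 - a * P c z) (nz y Uy) (dB (dC y 1) (dM (dC y a) (HP c y Uy)))).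
split.
- move=> y Uy.
  have H := dM (dM (dC y (c * a)) (HP c y Uy)) (HQ y Uy).
  rewrite (derive1_is (dNear oU Uy (fun z Uz => (F z Uz).1) H)).
  rewrite (F y Uy).1 (F y Uy).2.
  have := nz y Uy; have := Unz y Uy; have := Pnz c y; move: a0 c0 => H1 H2 H3 H4 H5.
  by field; rewrite H1 H2 H3 H4 H5.
- move=> y Uy.
  have H := dM (dC y c) (HQ y Uy).
  rewrite (derive1_is (dNear oU Uy (fun z Uz => (F z Uz).2) H)).
  rewrite (F y Uy).1 (F y Uy).2.
  have := nz y Uy; have := Unz y Uy; have := Pnz c y; move: a0 c0 => H1 H2 H3 H4 H5.
  by field; rewrite ?H1 ?H2 ?H3 ?H4 ?H5.
- exists x0 => //; rewrite (F x0 Ux0).1 (F x0 Ux0).2.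
  apply/eqP => E; move: c0; rewrite -oppr_eq0.
  have -> : - c = c * a * P c x0 / (1 - a * P c x0) - c / (1 - a * P c x0).
    by field; rewrite nz.
  by rewrite E subrr eqxx.
Qed.

End Helpers.
Import Helpers.
Unset Implicit Arguments.
Set Strict Implicit.

Theorem theorem4p2 (R : realType) (U : set (CC R)) (L : CC R -> CC R)
    (f1 f2 : CC R -> CC R) :
  is_domain U -> (forall x, U x -> x != 0) -> log_branch U L ->
  holomorphic_on U f1 -> holomorphic_on U f2 ->
  (forall x, U x -> f1 x != 0) -> (forall x, U x -> f2 x != 0) ->
  ((period2_orbit U f1 f2 /\ nondeg_pair U f1 f2) <->
    exists a c : CC R, [/\ a != 0, c != 0,
      (forall x, U x -> 1 - a * cpow L c x != 0) &
      (forall x, U x ->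
         f1 x = c * a * cpow L c x / (1 - a * cpow L c x) /\
         f2 x = c / (1 - a * cpow L c x))])
  /\
  ((period2_orbit U f1 f2 /\ nondeg_pair U f1 f2) <->
   (period2_orbit U f2 f1 /\ nondeg_pair U f2 f1)).
Proof.
move=> [U0 oU cU] Unz HLb h1 h2 n1 n2.
split; last first.
  by split => -[[A B] [x Ux ne]]; split => //; exists x => //; rewrite eq_sym.
have Hc := deriv0_const oU cU.
have HP : forall c x, U x -> is_derive x 1 (cpow L c) (c * x^-1 * cpow L c x).
  by move=> c x Ux; exact: (cpow_deriv c oU HLb Ux).
have Pnz : forall c x, cpow L c x != 0 by move=> c x; exact: cexp_neq0.
split.
- move=> [[A B] nd].
  exact: (fwd_generic oU Hc Unz HP Pnz h1 h2 n1 n2 A B nd).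
- move=> H; have [A B nd] := bwd_generic oU U0 Unz HP Pnz H.
  by split.
Qed.
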